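(* Let $W \subseteq \mathbb{Z}$. Then $W$ is a minimal additive complement to itself if and only if $W + W = \mathbb{Z}$ and $W$ contains no 3-term arithmetic progression.
   Context: For $X, Y \subseteq \mathbb{Z}$, $X + Y = \{x + y : x \in X, y \in Y\}$. A set $C \subseteq \mathbb{Z}$ is an additive complement to $W \subseteq \mathbb{Z}$ if $C + W = \mathbb{Z}$; it is a minimal additive complement to $W$ if moreover no proper subset of $C$ is an additive complement to $W$. A 3-term arithmetic progression in $W$ is a triple $w - d, w, w + d$ of elements of $W$ with $d \neq 0$. *)

(* Defs.v *)
From Stdlib Require Import ZArith.
Open Scope Z_scope.

Definition sumset (X Y : Z -> Prop) (z : Z) : Prop :=
  exists x y, X x /\ Y y /\ z = x + y.

Definition subset (X Y : Z -> Prop) : Prop := forall z, X z -> Y z.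

Definition additive_complement (C W : Z -> Prop) : Prop :=
  forall z, sumset C W z.

Definition proper_subset (X Y : Z -> Prop) : Prop :=
  subset X Y /\ exists y, Y y /\ ~ X y.

Definition minimal_additive_complement (C W : Z -> Prop) : Prop :=
  additive_complement C W /\
  forall C', proper_subset C' C -> ~ additive_complement C' W.

Definition has_3AP (W : Z -> Prop) : Prop :=
  exists w d, d <> 0 /\ W (w - d) /\ W w /\ W (w + d).

(* Main.v *)
Require Import Defs.
From Stdlib Require Import ZArith Lia.
Open Scope Z_scope.

Theorem theorem10 (W : Z -> Prop) :
  minimal_additive_complement W W <->
  ((forall z, sumset W W z) /\ ~ has_3AP W).
Proof.
  split.
  - intros [Hc Hmin]. split; [exact Hc|].
    intros [w [d [Hd [H1 [H2 H3]]]]].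
    apply (Hmin (fun x => W x /\ x <> w)).
    + split.
      * intros z [Hz _]; exact Hz.
      * exists w; split; [exact H2|]. intros [_ H]; apply H; reflexivity.
    + intros z. destruct (Hc z) as [c [v [Hcw [Hv Hz]]]].
      destruct (Z.eq_dec c w) as [e|ne].
      * destruct (Z.eq_dec v w) as [e'|ne'].
        -- exists (w - d), (w + d). repeat split; auto; lia.
        -- exists v, c. repeat split; auto; lia.
      * exists c, v. repeat split; auto.
  - intros [Hc Hno]. split; [exact Hc|].
    intros C' [Hsub [w [Hw Hnw]]] HC'.
    destruct (HC' (2 * w)) as [c [v [Hcc [Hv Hz]]]].
    apply Hno. exists w, (w - c). split.
    + intro E. assert (c = w) by lia. subst. contradiction.
    + split; [replace (w - (w - c)) with c by lia; apply Hsub; exact Hcc|].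
      split; [exact Hw|]. replace (w + (w - c)) with v by lia. exact Hv.
Qed.
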